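(* Let $B$ be a nilpotent $n\times n$ matrix with $\mathrm{sh}(B)=(\lambda,\lambda)$ (so $n=2\lambda$). If $\underline{\mu}=(\mu_1,\ldots,\mu_s)\in\mathcal{P}(\mathcal{N}_B)$, then either $\underline{\mu}=(n)$ or $\mu_1\le\lambda+1$.
   Context: $\mathbb{F}$ is an algebraically closed field of characteristic $0$. For a nilpotent matrix $A$, $\mathrm{sh}(A)$ is the partition of $n$ given by the sizes of the Jordan blocks of its Jordan canonical form; $\mathcal{N}_B$ is the set of nilpotent $n\times n$ matrices over $\mathbb{F}$ commuting with $B$ and $\mathcal{P}(\mathcal{N}_B)=\{\mathrm{sh}(A):A\in\mathcal{N}_B\}$. *)

(* Defs.v *)
From HB Require Import structures.
From mathcomp Require Import all_boot all_order all_algebra.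
Set Implicit Arguments. Unset Strict Implicit. Unset Printing Implicit Defensive.
Import GRing.Theory.
Local Open Scope ring_scope.

Definition is_partition (mu : seq nat) : bool :=
  sorted geq mu && all (fun x => 0 < x)%N mu.

Definition block_ends (mu : seq nat) : seq nat :=
  [seq sumn (take k mu) | k <- iota 1 (size mu)].

(* The nilpotent Jordan matrix with blocks of sizes mu (in that order):
   ones on the superdiagonal except at the boundaries between blocks. *)
Definition jordan_nil (F : fieldType) (n : nat) (mu : seq nat) : 'M[F]_n :=
  \matrix_(i < n, j < n)
    (if (j == i.+1 :> nat) && (i.+1 \notin block_ends mu) then 1 else 0).

Definition mx_similar (F : fieldType) (n : nat) (A C : 'M[F]_n) : Prop :=
  exists2 P : 'M[F]_n, P \in unitmx & P *m A = C *m P.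

Definition mx_nilpotent (F : fieldType) (n : nat) (A : 'M[F]_n) : Prop :=
  exists k : nat, iter k (mulmx A) 1%:M = 0.

(* sh(A) = mu : mu is a partition of n and the Jordan canonical form of A
   is the nilpotent Jordan matrix with blocks of sizes mu. *)
Definition has_shape (F : fieldType) (n : nat) (A : 'M[F]_n) (mu : seq nat) : Prop :=
  [/\ is_partition mu, sumn mu = n & mx_similar A (jordan_nil F n mu)].

(* Main.v *)
Require Import Defs.
From HB Require Import structures.
From mathcomp Require Import all_boot all_order all_algebra.
From mathcomp Require Import zify ring.
Import GRing.Theory.
Local Open Scope ring_scope.
Set Implicit Arguments. Unset Strict Implicit. Unset Printing Implicit Defensive.

Section Gen.
Variable F : fieldType.

Definition pw n (M : 'M[F]_n) k := iter k (mulmx M) 1%:M.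

Lemma pwS n (M : 'M[F]_n) k : pw M k.+1 = M *m pw M k. Proof. by []. Qed.
Lemma pw0 n (M : 'M[F]_n) : pw M 0 = 1%:M. Proof. by []. Qed.
Lemma pwD n (M : 'M[F]_n) a b : pw M (a + b)%N = pw M a *m pw M b.
Proof.
elim: a => [|a IH]; first by rewrite add0n pw0 mul1mx.
by rewrite addSn !pwS IH mulmxA.
Qed.

Lemma pw_conj n (P Pi M : 'M[F]_n) : P *m Pi = 1%:M -> Pi *m P = 1%:M ->
  forall k, pw (P *m M *m Pi) k = P *m pw M k *m Pi.
Proof.
move=> H1 H2; elim=> [|k IH]; first by rewrite !pw0 mulmx1.
by rewrite !pwS IH !mulmxA -(mulmxA _ Pi P) H2 mulmx1.
Qed.

Lemma pw_comm n (M X : 'M[F]_n) : M *m X = X *m M -> forall k, pw M k *m X = X *m pw M k.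
Proof.
move=> H; elim=> [|k IH]; first by rewrite pw0 mul1mx mulmx1.
by rewrite pwS -mulmxA IH !mulmxA H.
Qed.

Lemma pw_le0 n (M : 'M[F]_n) a b : (a <= b)%N -> pw M a = 0 -> pw M b = 0.
Proof. by move=> /subnKC <- H; rewrite pwD H mul0mx. Qed.

Fixpoint reach (R : nat -> nat -> Prop) m i j : Prop :=
  if m is m'.+1 then exists k, R i k /\ reach R m' k j else i = j.

Lemma pw_supp n (M : 'M[F]_n) (R : nat -> nat -> Prop) :
  (forall i j : 'I_n, M i j != 0 -> R i j) ->
  forall m (i j : 'I_n), pw M m i j != 0 -> reach R m i j.
Proof.
move=> HM; elim=> [|m IH] i j.
  case: (eqVneq i j) => [->//|ne]; by rewrite pw0 mxE (negbTE ne) mulr0n eqxx.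
rewrite pwS mxE => H.
case: (pickP (fun k => M i k * pw M m k j != 0)) => [k Hk | H0]; last first.
  by move: H; rewrite big1 ?eqxx // => k _; apply/eqP; move: (H0 k) => /= /negbFE.
move: Hk; rewrite mulf_eq0 negb_or => /andP[H1 H2].
by exists k; split; [apply: HM | apply: IH].
Qed.

Lemma reach_q (R : nat -> nat -> Prop) (q : nat -> nat) :
  (forall i j, R i j -> q i < q j)%N -> forall m i j, reach R m i j -> (q i + m <= q j)%N.
Proof.
move=> Hq; elim=> [|m IH] i j /=; first by move=> ->; rewrite addn0.
by move=> [k [/Hq h1 /IH h2]]; lia.
Qed.

Lemma pw_chain n (M : 'M[F]_n) (pos : nat -> nat) (s : nat -> 'I_n) K :
  (forall i j : 'I_n, M i j != 0 -> (pos i < pos j)%N) ->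
  (forall i j : 'I_n, pos i = pos j -> i = j) ->
  (forall k, k <= K -> pos (s k) = k)%N ->
  (forall k, (k < K)%N -> M (s k) (s k.+1) != 0) ->
  forall m a, (a + m <= K)%N -> pw M m (s a) (s (a + m)%N) != 0.
Proof.
move=> Hsupp Hinj Hpos Hch; elim=> [|m IH] a Ham.
  by rewrite addn0 pw0 mxE eqxx mulr1n oner_eq0.
rewrite pwS mxE (bigD1 (s a.+1)) //= big1 ?addr0.
  rewrite -addSnnS; apply: mulf_neq0; [apply: Hch; lia| apply: IH; lia].
move=> k Hk; apply/eqP; rewrite mulf_eq0; apply/negPn/negP; rewrite negb_or => /andP[H1 H2].
have h1 := Hsupp _ _ H1.
have h2 := reach_q (fun i j (h : (pos i < pos j)%N) => h)
   (pw_supp (fun i j (h : M i j != 0) => Hsupp i j h) H2).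
rewrite Hpos in h1; last by lia.
rewrite Hpos in h2; last by lia.
have e : pos k = pos (s a.+1) by rewrite Hpos; lia.
by move: Hk; rewrite (Hinj _ _ e) eqxx.
Qed.

Lemma block_ends_cons x s : block_ends (x :: s) = x :: map (addn x) (block_ends s).
Proof.
rewrite /block_ends /= take0 addn0; congr (_ :: _).
rewrite (iotaDl 1 1) -!map_comp; apply: eq_map => k /=.
by rewrite add0n.
Qed.

Lemma be_ge x s e : e \in block_ends (x :: s) -> (x <= e)%N.
Proof.
rewrite block_ends_cons inE => /orP[/eqP -> //|/mapP [y _ ->]]; exact: leq_addr.
Qed.

Lemma be_gap h s i : all (fun y => y <= h)%N s -> (i < sumn s)%N ->
  exists2 e, e \in block_ends s & (i < e <= i + h)%N.
Proof.
elim: s i => [|x s IH] i //= /andP[hx hs] hi.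
case: (ltnP i x) => hix.
  by exists x; [rewrite block_ends_cons mem_head | lia].
have [e he1 he2] := IH (i - x)%N hs ltac:(lia).
exists (x + e)%N; last by lia.
by rewrite block_ends_cons inE; apply/orP; right; apply: map_f.
Qed.

Lemma jn_supp n mu (i j : 'I_n) : jordan_nil F n mu i j != 0 ->
  (j = i.+1 :> nat) /\ i.+1 \notin block_ends mu.
Proof.
rewrite mxE; case: ifP => [/andP[/eqP -> ->] //| _]; by rewrite eqxx.
Qed.

Lemma reachJ mu m i j :
  reach (fun i j => j = i.+1 /\ i.+1 \notin block_ends mu) m i j ->
  j = (i + m)%N /\ forall t, (i < t <= i + m)%N -> t \notin block_ends mu.
Proof.
elim: m i => [|m IH] i /=; first by move=> ->; split=> [|t]; [rewrite addn0|lia].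
move=> [k [[-> hk] /IH [-> ht]]]; split; first by lia.
move=> t ht'; case: (eqVneq t i.+1) => [->//|ne]; apply: ht; lia.
Qed.

Lemma sorted_all x s : sorted geq (x :: s) -> all (fun y => y <= x)%N (x :: s).
Proof.
move=> hs; rewrite /= leqnn /=.
have := order_path_min (leT := geq) _ hs.
by apply; move=> a b c /= h1 h2; apply: leq_trans h2 h1.
Qed.

Lemma J1 n mu : is_partition mu -> sumn mu = n ->
  pw (jordan_nil F n mu) (head 0%N mu)%N = 0.
Proof.
move=> /andP[hs hp] hn; apply/matrixP => i j; rewrite [RHS]mxE.
apply/eqP/negPn/negP => H.
have [hj hb] := reachJ (pw_supp (fun i j h => jn_supp h) H).
case: mu hs hp hn H hj hb => [|x s] hs hp hn H hj hb.
  by move: (ltn_ord i) hn => /= ? ?; lia.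
have hall := sorted_all hs.
have [e he1 he2] := be_gap hall (i := i) ltac:(rewrite hn; exact: ltn_ord).
by move: (hb e he2); rewrite he1.
Qed.

Lemma J2 n mu : (0 < n)%N -> is_partition mu -> sumn mu = n ->
  pw (jordan_nil F n mu) (head 0%N mu).-1 != 0.
Proof.
move=> n0 /andP[hs hp] hn.
case: mu hs hp hn => [|x s] hs hp hn.
  by move: hn n0 => /= <-.
move: hp => /= /andP[hx hp].
case: n n0 hn => [|n'] n0 /= hn; first by lia.
have := @pw_chain _ (jordan_nil F n'.+1 (x :: s)) id (fun k => inord k) x.-1.
move=> /(_ _ _ _ _ x.-1 0) /=.
rewrite add0n => H; apply/negP => /eqP E; move: H; rewrite E mxE eqxx => H; suff: ~~ true by []; apply: H.
- by move=> i j /jn_supp [-> _].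
- by move=> i j; apply: val_inj.
- by move=> k hk; rewrite inordK //; lia.
- move=> k hk; rewrite mxE !inordK ?eqxx /=; try lia.
  case: ifP => [_|]; first by rewrite oner_eq0.
  by move=> /negbFE /be_ge; lia.
- by [].
Qed.


Definition Nsh (p : nat) : 'M[F]_p := \matrix_(i, j) ((j == i.+1 :> nat)%:R).
Definition JJ L : 'M[F]_(L+L) := block_mx (Nsh L) 0 0 (Nsh L).

Lemma jordanJJ L : jordan_nil F (L + L) [:: L; L] = JJ L.
Proof.
apply/matrixP => i j; rewrite -(splitK i) -(splitK j).
case: (split i) => i'; case: (split j) => j' /=;
  rewrite ?block_mxEul ?block_mxEur ?block_mxEdl ?block_mxEdr !mxE /block_ends /= !inE /=.
all: have hi := ltn_ord i'; have hj := ltn_ord j'.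
all: case: ifP => H //; try (case: eqP => e //=); exfalso; lia.
Qed.


Lemma mulN_entry p (M : 'M[F]_p.+1) (k j : 'I_p.+1) :
  (M *m Nsh p.+1) k j = if (0 < j)%N then M k (inord j.-1) else 0.
Proof.
rewrite mxE; case: j => [[|j'] hj] /=.
  by rewrite big1 // => m _; rewrite mxE /= mulr0.
rewrite (bigD1 (inord j')) /= ?mxE ?inordK ?eqxx ?mulr1; try lia.
rewrite big1 ?addr0 // => m hm; rewrite mxE eqSS.
case: eqP => e; last by rewrite mulr0.
by move: hm; rewrite e inord_val eqxx.
Qed.

Lemma Nmul_entry p (M : 'M[F]_p.+1) (k j : 'I_p.+1) :
  (Nsh p.+1 *m M) k j = if (k.+1 < p.+1)%N then M (inord k.+1) j else 0.
Proof.
rewrite mxE; case: ifP => hk.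
  rewrite (bigD1 (inord k.+1)) /= ?mxE ?inordK ?eqxx ?mul1r //.
  rewrite big1 ?addr0 // => m hm; rewrite mxE.
  case: eqP => e; last by rewrite mul0r.
  by move: hm; rewrite -e inord_val eqxx.
rewrite big1 // => m _; rewrite mxE; case: eqP => e; last by rewrite mul0r.
by move: (ltn_ord m) hk; rewrite e => ->.
Qed.

Lemma toep1 p (M : 'M[F]_p.+1) : M *m Nsh p.+1 = Nsh p.+1 *m M ->
  forall k j : 'I_p.+1, M k j = if (k <= j)%N then M ord0 (inord (j - k)) else 0.
Proof.
move=> H.
have E (k j : 'I_p.+1) : (if (0 < j)%N then M k (inord j.-1) else 0) =
    (if (k.+1 < p.+1)%N then M (inord k.+1) j else 0).
  by rewrite -mulN_entry -Nmul_entry H.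
suff S : forall k, (k < p.+1)%N -> forall j : 'I_p.+1,
    M (inord k) j = if (k <= j)%N then M ord0 (inord (j - k)) else 0.
  by move=> k j; rewrite -S ?inord_val.
elim=> [|k IH] hk j.
  rewrite subn0 inord_val /=; congr (M _ _); apply: val_inj; by rewrite /= inordK.
have := E (inord k) j; rewrite inordK; last by lia.
rewrite hk => <-.
case: j => [[|j] hj] /=; first by [].
rewrite IH; last by lia.
rewrite inordK /=; last by lia.
by rewrite ltnS subSS.
Qed.

Definition ix L (a : bool) (k : 'I_L) : 'I_(L+L) := if a then rshift L k else lshift L k.
Definition blk L a b (C : 'M[F]_(L+L)) : 'M_L := \matrix_(k, l) C (ix a k) (ix b l).

Lemma blk_comm L (C : 'M[F]_(L+L)) : C *m JJ L = JJ L *m C ->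
  forall a b, blk a b C *m Nsh L = Nsh L *m blk a b C.
Proof.
rewrite /JJ -(submxK C) !mulmx_block !mulmx0 !mul0mx !addr0 !add0r.
case/eq_block_mx => h1 h2 h3 h4 a b.
have -> : blk a b (block_mx (ulsubmx C) (ursubmx C) (dlsubmx C) (drsubmx C)) =
  (if a then if b then drsubmx C else dlsubmx C else if b then ursubmx C else ulsubmx C).
  apply/matrixP => k l; rewrite mxE.
  by case: a; case: b; rewrite /ix ?block_mxEul ?block_mxEur ?block_mxEdl ?block_mxEdr.
by case: a; case: b.
Qed.


Lemma pw_zero_q n (M : 'M[F]_n) (q : nat -> nat) m :
  (forall i j : 'I_n, M i j != 0 -> (q i < q j)%N) -> (forall j : 'I_n, (q j < m)%N) ->
  pw M m = 0.
Proof.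
move=> Hs Hb; apply/matrixP => i j; rewrite [RHS]mxE; apply/eqP/negPn/negP => H.
have := reach_q (fun i j (h : (q i < q j)%N) => h) (pw_supp (fun i j (h : M i j != 0) => Hs i j h) H).
have := Hb j; lia.
Qed.

Lemma transfer n (C Q Qi : 'M[F]_n) a b : Q *m Qi = 1%:M -> Qi *m Q = 1%:M ->
  (pw (Q *m C *m Qi) a = 0 \/ pw (Q *m C *m Qi) b != 0) -> (pw C a = 0 \/ pw C b != 0).
Proof.
move=> h1 h2; rewrite !pw_conj //.
have E m : pw C m = Qi *m (Q *m pw C m *m Qi) *m Q.
  by rewrite !mulmxA h2 mul1mx -mulmxA h2 mulmx1.
case=> [h|h]; [left|right]; first by rewrite E h mulmx0 mul0mx.
by apply: contraNneq h => ->; rewrite mulmx0 mul0mx.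
Qed.

Section Block.
Variable l : nat.
Local Notation L := l.+1.

Lemma toep (C : 'M[F]_(L+L)) : C *m JJ L = JJ L *m C ->
  forall a b (k j : 'I_L), C (ix a k) (ix b j) =
    if (k <= j)%N then C (ix a ord0) (ix b (inord (j - k))) else 0.
Proof. by move=> H a b k j; have := toep1 (blk_comm H a b) k j; rewrite !mxE. Qed.

Lemma toep0 (C : 'M[F]_(L+L)) : C *m JJ L = JJ L *m C ->
  forall a b (k : 'I_L), (0 < k)%N -> C (ix a k) (ix b ord0) = 0.
Proof. by move=> H a b k hk; rewrite (toep H); case: ifP => //=; lia. Qed.

Definition red (C : 'M[F]_(L+L)) a b : F := C (ix a ord0) (ix b ord0).

Lemma red_mul (C D : 'M[F]_(L+L)) : D *m JJ L = JJ L *m D -> forall a b,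
  red (C *m D) a b = red C a false * red D false b + red C a true * red D true b.
Proof.
move=> H a b; rewrite /red mxE big_split_ord /= !big_ord_recl /=.
rewrite !big1 ?addr0 //.
  by move=> i _; rewrite [D _ _](toep0 H true b (k := lift ord0 i)) ?mulr0.
by move=> i _; rewrite [D _ _](toep0 H false b (k := lift ord0 i)) ?mulr0.
Qed.

Definition Qm (p q r t : F) : 'M[F]_(L+L) := block_mx p%:M q%:M r%:M t%:M.

Lemma Qm_comm p q r t : Qm p q r t *m JJ L = JJ L *m Qm p q r t.
Proof. by rewrite /Qm /JJ !mulmx_block !mulmx0 !mul0mx !addr0 !add0r !scalar_mxC. Qed.

Lemma Qm_mul p q r t p' q' r' t' : Qm p q r t *m Qm p' q' r' t' =
  Qm (p * p' + q * r') (p * q' + q * t') (r * p' + t * r') (r * q' + t * t').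
Proof. by rewrite /Qm mulmx_block -!scalar_mxM -!raddfD. Qed.

Lemma Qm1 : Qm 1 0 0 1 = 1%:M.
Proof. by rewrite /Qm raddf0 [RHS]scalar_mx_block. Qed.

Lemma red_Qm p q r t : [/\ red (Qm p q r t) false false = p, red (Qm p q r t) false true = q,
  red (Qm p q r t) true false = r & red (Qm p q r t) true true = t].
Proof.
by rewrite /red /Qm /ix block_mxEul block_mxEur block_mxEdl block_mxEdr !mxE eqxx !mulr1n.
Qed.

Lemma red1 a b : red 1%:M a b = (a == b)%:R.
Proof. by rewrite /red mxE; case: a; case: b; rewrite //= eqxx. Qed.

Lemma red0 a b : red 0 a b = 0.
Proof. by rewrite /red mxE. Qed.

Lemma red_nil (C : 'M[F]_(L+L)) : C *m JJ L = JJ L *m C -> forall k, pw C k = 0 ->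
  red C false false + red C true true = 0 /\ red C false false * red C true true - red C false true * red C true false = 0.
Proof.
move=> H k Hk.
set X := fun m => red (pw C m).
have XS m a b : X m.+1 a b = red C a false * X m false b + red C a true * X m true b.
  by rewrite /X pwS red_mul //; apply: pw_comm.
have X0 a b : X 0%N a b = (a == b)%:R by rewrite /X pw0 red1.
set a := red C false false; set b := red C false true; set c := red C true false; set d := red C true true.
have hk0 : (0 < k)%N.
  case: k Hk => // /(congr1 (fun M => red M false false)); rewrite pw0 red1 red0 /=.
  by move/eqP; rewrite oner_eq0.
have Xk a' b' : X k a' b' = 0 by rewrite /X Hk red0.
have hdet m : X m false false * X m true true - X m false true * X m true false = (a*d - b*c) ^+ m.
  elim: m => [|m IH]; first by rewrite !X0 /= mulr0 subr0 mulr1 expr0.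
  by rewrite !XS exprS -IH -/a -/b -/c -/d; ring.
have hd : a * d - b * c = 0.
  apply/eqP; have := expf_eq0 (a * d - b * c) k; rewrite hk0 /= => <-.
  by rewrite -hdet !Xk mulr0 subr0.
split=> //.
have key a' b' : red C a' false * red C false b' + red C a' true * red C true b' = (a + d) * red C a' b'.
  case: a'; case: b'; rewrite -/a -/b -/c -/d.
  - by apply/eqP; rewrite eq_sym -subr_eq0 -hd; apply/eqP; ring.
  - by ring.
  - by ring.
  - by apply/eqP; rewrite eq_sym -subr_eq0 -hd; apply/eqP; ring.
have hX m a' b' : X m.+1 a' b' = (a + d) ^+ m * red C a' b'.
  elim: m a' b' => [|m IH] a' b'.
    by rewrite XS !X0; case: a'; case: b'; rewrite /= expr0 mul1r ?mulr1 ?mulr0 ?addr0 ?add0r.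
  by rewrite (XS m.+1) !IH !mulrA ![_ * (a + d) ^+ m]mulrC -!mulrA -mulrDr key exprS mulrA [(a + d) * _]mulrC.
have [m em] : exists m, k = m.+1 by case: (k) hk0 => // m _; exists m.
rewrite em in Xk.
have : (a + d) ^+ m.+1 = 0.
  by rewrite exprSr mulrDr -!hX !Xk addr0.
by move/eqP; rewrite expf_eq0 /= => /eqP.
Qed.


Lemma ix_val a (k : 'I_L) : nat_of_ord (ix a k) = (if a then L + k else k)%N.
Proof. by case: a. Qed.

Lemma ixP (i : 'I_(L+L)) : exists a k, i = ix a k.
Proof. by rewrite -(splitK i); case: (split i) => k; [exists false | exists true]; exists k. Qed.

Lemma inord0L : inord 0 = ord0 :> 'I_L.
Proof. by apply: val_inj; rewrite /= inordK. Qed.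

Definition qz (v : nat) := if (v < L)%N then v else (v - L).+1.
Lemma qz_ix a (k : 'I_L) : qz (ix a k) = (k + a)%N.
Proof. rewrite /qz ix_val; case: a; have := ltn_ord k; case: ifP => //=; lia. Qed.

Definition posn (v : nat) := if (v < L)%N then (v + v)%N else ((v - L) + (v - L)).+1.
Lemma posn_ix a (k : 'I_L) : posn (ix a k) = (k + k + a)%N.
Proof. rewrite /posn ix_val; case: a; have := ltn_ord k; case: ifP => //=; lia. Qed.

Lemma core_nf (C : 'M[F]_(L+L)) : C *m JJ L = JJ L *m C ->
  red C false false = 0 -> red C true false = 0 -> red C true true = 0 -> red C false true != 0 ->
  pw C L.+1 = 0 \/ pw C (L + L).-1 != 0.
Proof.
move=> H h00 h10 h11 h01.
set g := C (ix true ord0) (ix false (inord 1)).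
have T a b (k k' : 'I_L) : C (ix a k) (ix b k') != 0 ->
   [/\ (k <= k')%N, (k' = k :> nat) -> red C a b != 0 &
       (k' = k.+1 :> nat) -> C (ix a ord0) (ix b (inord 1)) != 0].
  rewrite (toep H); case: ifP => hkk; last by rewrite eqxx.
  move=> hne; split=> // e; move: hne; rewrite e.
    by rewrite subnn inord0L.
  by rewrite subSnn.
case: (eqVneq g 0) => hg.
- left; apply: (pw_zero_q (q := qz)); last first.
    by move=> j; have [b [k ->]] := ixP j; rewrite qz_ix; have := ltn_ord k; case: b => /=; lia.
  move=> i j; have [a [k ->]] := ixP i; have [b [k' ->]] := ixP j.
  move/T => [hk e0 e1]; rewrite !qz_ix.
  case: a b e0 e1 => [] [] e0 e1 /=.
  + case: (eqVneq (k' : nat) k) => [/e0|ne]; first by rewrite h11 eqxx.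
    lia.
  + case: (eqVneq (k' : nat) k) => [/e0|ne]; first by rewrite h10 eqxx.
    case: (eqVneq (k' : nat) k.+1) => [/e1|ne']; first by rewrite -/g hg eqxx.
    lia.
  + lia.
  + case: (eqVneq (k' : nat) k) => [/e0|ne]; first by rewrite h00 eqxx.
    lia.
- right; apply/negP => /eqP E.
  pose s : nat -> 'I_(L+L) := fun m => ix (odd m) (inord m./2 : 'I_L).
  have := @pw_chain _ C posn s (L + L).-1.
  move=> /(_ _ _ _ _ (L + L).-1 0 (leqnn _)); rewrite add0n E mxE eqxx => Hc.
  suff: ~~ true by []; apply: Hc.
  + move=> i j; have [a [k ->]] := ixP i; have [b [k' ->]] := ixP j.
    move/T => [hk e0 e1]; rewrite !posn_ix.
    case: a b e0 e1 => [] [] e0 e1 /=.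
    * case: (eqVneq (k' : nat) k) => [/e0|ne]; first by rewrite h11 eqxx.
      lia.
    * case: (eqVneq (k' : nat) k) => [/e0|ne]; first by rewrite h10 eqxx.
      lia.
    * lia.
    * case: (eqVneq (k' : nat) k) => [/e0|ne]; first by rewrite h00 eqxx.
      lia.
  + move=> i j; have [a [k ->]] := ixP i; have [b [k' ->]] := ixP j.
    rewrite !posn_ix => e; apply: val_inj; rewrite /= !ix_val.
    by case: a b e => [] [] /= e; lia.
  + move=> m hm; rewrite /s posn_ix inordK; last by lia.
    have := odd_double_half m; rewrite -addnn; case: (odd m) => /=; lia.
  + move=> m hm; rewrite /s /=.
    have hh : m.+1./2 = (m./2 + odd m)%N by rewrite /= uphalf_half addnC.
    have := odd_double_half m; rewrite -addnn => hm2.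
    rewrite uphalf_half addnC (toep H) !inordK; try (case: (odd m) hm2 => /=; lia).
    case: (odd m) hm2 => /= hm2.
    * rewrite addn1 leqnSn subSnn; exact: hg.
    * by rewrite addn0 leqnn subnn inord0L.
Qed.


Definition lz (v : nat) := if (v < L)%N then v else (v - L)%N.
Lemma lz_ix a (k : 'I_L) : lz (ix a k) = k.
Proof. rewrite /lz ix_val; case: a; have := ltn_ord k; case: ifP => //=; lia. Qed.

Lemma core_zero (C : 'M[F]_(L+L)) : C *m JJ L = JJ L *m C ->
  (forall a b, red C a b = 0) -> pw C L.+1 = 0.
Proof.
move=> H h0; apply: (pw_zero_q (q := lz)); last first.
  by move=> j; have [b [k ->]] := ixP j; rewrite lz_ix; have := ltn_ord k; lia.
move=> i j; have [a [k ->]] := ixP i; have [b [k' ->]] := ixP j.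
rewrite (toep H) !lz_ix; case: ifP => hkk; last by rewrite eqxx.
case: (eqVneq (k' : nat) k) => [e|ne]; last by lia.
by rewrite e subnn inord0L -/(red C a b) h0 eqxx.
Qed.

Lemma Qm_comm_conj (C : 'M[F]_(L+L)) p q r t p' q' r' t' : C *m JJ L = JJ L *m C ->
  (Qm p q r t *m C *m Qm p' q' r' t') *m JJ L = JJ L *m (Qm p q r t *m C *m Qm p' q' r' t').
Proof.
by move=> H; rewrite -!mulmxA Qm_comm !mulmxA -(mulmxA _ C) H !mulmxA Qm_comm.
Qed.

Lemma red_conj (C : 'M[F]_(L+L)) p q r t p' q' r' t' : C *m JJ L = JJ L *m C ->
  forall a b, red (Qm p q r t *m C *m Qm p' q' r' t') a b =
   (red (Qm p q r t) a false * red C false false + red (Qm p q r t) a true * red C true false) * red (Qm p' q' r' t') false b +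
   (red (Qm p q r t) a false * red C false true + red (Qm p q r t) a true * red C true true) * red (Qm p' q' r' t') true b.
Proof. by move=> H a b; rewrite red_mul ?Qm_comm // !red_mul. Qed.

Lemma core (C : 'M[F]_(L+L)) : C *m JJ L = JJ L *m C -> (exists k, pw C k = 0) ->
  pw C L.+1 = 0 \/ pw C (L + L).-1 != 0.
Proof.
move=> H [k Hk]; have [ht hdl] := red_nil H Hk.
move: ht hdl.
set a := red C false false; set b := red C false true; set c := red C true false; set d := red C true true.
move=> ht hdl.
have hd : d = - a by apply/eqP; rewrite -addr_eq0 addrC ht.
have hbc : b * c = - (a * a) by rewrite -(subr0_eq hdl) hd mulrN.
case: (eqVneq b 0) => hb.
  have ha : a = 0.
    by move: hbc; rewrite hb mul0r => /eqP; rewrite eq_sym oppr_eq0 mulf_eq0 orbb => /eqP.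
  case: (eqVneq c 0) => hc.
    left; apply: core_zero => // - [] [] //=; rewrite -/a -/b -/c -/d ?ha ?hb ?hc ?hd ?ha ?oppr0 //.
  apply: (transfer (Q := Qm 0 1 1 0) (Qi := Qm 0 1 1 0)).
  - by rewrite Qm_mul -Qm1; congr Qm; ring.
  - by rewrite Qm_mul -Qm1; congr Qm; ring.
  apply: core_nf; first exact: Qm_comm_conj.
  1-4: rewrite (red_conj _ _ _ _ _ _ _ _ H); have [e1 e2 e3 e4] := red_Qm 0 1 1 0; rewrite ?e1 ?e2 ?e3 ?e4; rewrite -/a -/b -/c -/d hd ha hb.
  - by ring.
  - by ring.
  - by ring.
  - by rewrite oppr0 !mul0r !mul1r !mulr0 !addr0 !add0r mulr1.
pose s := a / b.
have hc : c = - (a * a) / b by rewrite -hbc [b * c]mulrC mulfK.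
apply: (transfer (Q := Qm 1 0 s 1) (Qi := Qm 1 0 (- s) 1)).
- by rewrite Qm_mul -Qm1; congr Qm; ring.
- by rewrite Qm_mul -Qm1; congr Qm; ring.
apply: core_nf; first exact: Qm_comm_conj.
all: rewrite (red_conj _ _ _ _ _ _ _ _ H); have [e1 e2 e3 e4] := red_Qm 1 0 s 1; rewrite ?e1 ?e2 ?e3 ?e4.
all: have [f1 f2 f3 f4] := red_Qm 1 0 (- s) 1; rewrite ?f1 ?f2 ?f3 ?f4; rewrite -/a -/b -/c -/d hd hc /s.
- by field.
- by field.
- by field.
- by rewrite !mul1r !mul0r !addr0 !mulr0 !add0r mulr1.
Qed.

End Block.

End Gen.

Unset Implicit Arguments. Set Strict Implicit.

Theorem proposition3p9 (F : closedFieldType) (charF0 : [pchar F] =i pred0)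
  (n lam : nat) (B : 'M[F]_n)
  (hBnil : mx_nilpotent B) (hB : has_shape B [:: lam; lam])
  (A : 'M[F]_n) (hAnil : mx_nilpotent A) (hAB : A *m B = B *m A)
  (mu : seq nat) (hmu : has_shape A mu) :
  mu = [:: n] \/ (head 0%N mu <= lam.+1)%N.
Proof.
case: hB => hpB hsB [P hP hPB].
case: hmu => hpm hsm [P2 hP2 hPA].
case: lam hpB hsB hPB => [|l] hpB hsB hPB.
  by move: hpB; rewrite /is_partition /= //= andbC.
move: hsB; rewrite /= addn0 => hn; move: hsm; subst n => hsm.
rewrite jordanJJ in hPB.
have hPi : P *m invmx P = 1%:M by rewrite mulmxV.
have hiP : invmx P *m P = 1%:M by rewrite mulVmx.
have hBJ : invmx P *m JJ F l.+1 = B *m invmx P.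
  by rewrite -[B *m _]mul1mx -hiP -!mulmxA (mulmxA P) hPB -!mulmxA hPi mulmx1.
set C := P *m A *m invmx P.
have hC : C *m JJ F l.+1 = JJ F l.+1 *m C.
  by rewrite /C -mulmxA hBJ !mulmxA -(mulmxA P) hAB mulmxA hPB.
have hCn : exists k, pw C k = 0.
  by case: hAnil => k hk; exists k; rewrite /C pw_conj // [pw A k]hk mulmx0 mul0mx.
have hA := transfer hPi hiP (core hC hCn).
have hP2i : P2 *m invmx P2 = 1%:M by rewrite mulmxV.
have hiP2 : invmx P2 *m P2 = 1%:M by rewrite mulVmx.
set Jm := jordan_nil F (l.+1 + l.+1) mu.
have hJA : invmx P2 *m Jm *m P2 = A by rewrite -mulmxA -hPA mulmxA hiP2 mul1mx.
have hJ : pw Jm l.+2 = 0 \/ pw Jm (l.+1 + l.+1).-1 != 0.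
  by apply: (transfer hiP2 hP2i); rewrite hJA.
have n0 : (0 < l.+1 + l.+1)%N by [].
have J2m := J2 F n0 hpm hsm.
have J1m := J1 F hpm hsm.
case: hJ => hJ.
  right; rewrite leqNgt; apply/negP => hgt; move: J2m; rewrite -/Jm (pw_le0 _ hJ) ?eqxx //; lia.
left.
have hh : ((l.+1 + l.+1).-1 < head 0%N mu)%N.
  rewrite ltnNge; apply/negP => hle; move: hJ; rewrite (pw_le0 hle J1m) eqxx.
  done.
case: mu hpm hsm hh {Jm hJA hJ J2m J1m hPA} => [|x s] hpm hsm hh; first by [].
move: hsm hh hpm => /= hsm hh /andP[_ /andP[_ hp]].
case: s hsm hp => [|y s] /= hsm hp.
  by rewrite addn0 in hsm; rewrite hsm.
move: hp => /andP[hy _]; lia.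
Qed.
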